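(* Let $G(V,E)$ be any graph, $p\in(0,1)$, and let $\mathrm{OPT}=\mathbb{E}[\mu(G_p)]$. Then $G$ contains a $\lfloor 1/p\rfloor$-matching with at least $(\lfloor 1/p\rfloor-1)\cdot \mathrm{OPT}$ edges.
   Context: A realization $G_p$ of $G$ is the random subgraph obtained by keeping each edge of $G$ independently with probability $p$; $\mu(X)$ is the maximum matching size of a graph $X$. For an integer $b\ge 1$, a (simple) $b$-matching in $G$ is a subset of edges of $G$ such that every vertex is incident to at most $b$ of them; its size is its number of edges. *)

(* Defs.v *)
From HB Require Import structures.
From mathcomp Require Import all_boot all_order all_algebra.
Set Implicit Arguments. Unset Strict Implicit. Unset Printing Implicit Defensive.
Import Order.TTheory GRing.Theory Num.Theory.

Definition simple_graph (V : finType) (E : {set {set V}}) : Prop :=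
  forall e, e \in E -> #|e| = 2%N.

Definition is_bmatching (V : finType) (b : nat) (M : {set {set V}}) : bool :=
  [forall v : V, #|[set e in M | v \in e]| <= b].

Definition is_matching (V : finType) (M : {set {set V}}) : bool :=
  is_bmatching 1 M.

Definition mu (V : finType) (X : {set {set V}}) : nat :=
  \max_(M : {set {set V}} | (M \subset X) && is_matching M) #|M|.

(* E[ mu(G_p) ]: each edge kept independently with probability p. *)
Definition expected_mu (R : numDomainType) (V : finType)
    (E : {set {set V}}) (p : R) : R :=
  (\sum_(S : {set {set V}} | S \subset E)
     p ^+ #|S| * (1 - p) ^+ (#|E| - #|S|) * (mu S)%:R)%R.

(* Main.v *)
Require Import Defs.
From HB Require Import structures.
From mathcomp Require Import all_boot all_order all_algebra.
From mathcomp Require Import lra.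
Import Order.TTheory GRing.Theory Num.Theory.
Set Implicit Arguments. Unset Strict Implicit. Unset Printing Implicit Defensive.
Local Open Scope ring_scope.

Definition Fw (R : numDomainType) (T : finType) (E : {set T}) (b : nat) (p : R)
  (e : T) (j : 'I_b.+1) : R :=
  if e \in E then (if j == ord0 then 1 - b%:R * p else p)
  else (if j == ord0 then 1 else 0).

Lemma lift0_neq b (i : 'I_b) : (lift ord0 i == ord0 :> 'I_b.+1) = false.
Proof. by rewrite eq_sym (negbTE (neq_lift _ _)). Qed.

Lemma sum_Fw (R : numDomainType) (T : finType) (E : {set T}) b (p : R) e :
  \sum_(j < b.+1) Fw E p e j = 1.
Proof.
rewrite big_ord_recl /Fw; case: (e \in E) => /=.
  by rewrite sumr_const card_ord mulr_natl subrK.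
by rewrite big1 ?addr0.
Qed.

Lemma big_nz (R : Type) (idx : R) (op : Monoid.law idx) b (F : 'I_b.+1 -> R) :
  \big[op/idx]_(j | j != ord0) F j = \big[op/idx]_(i < b) F (lift ord0 i).
Proof.
rewrite big_mkcond big_ord_recl eqxx /= Monoid.mul1m.
by [].
Qed.

Lemma factor_sum (R : numDomainType) (T : finType) (E : {set T}) b (p : R)
   (j : 'I_b.+1) (S : {set T}) e : j != ord0 ->
  \sum_(k < b.+1) Fw E p e k * ((k == j) == (e \in S))%:R =
  if e \in S then (if e \in E then p else 0) else (if e \in E then 1 - p else 1).
Proof.
move=> jn0; have FJ : Fw E p e j = if e \in E then p else 0.
  by rewrite /Fw (negbTE jn0).
case: (e \in S).
  rewrite (bigD1 j) //= eqxx mulr1 big1 ?addr0 // => k /negbTE ->.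
  by rewrite mulr0.
have := sum_Fw E b p e; rewrite (bigD1 j) //= => H.
rewrite (bigD1 j) //= eqxx mulr0 add0r.
have -> : \sum_(k < b.+1 | k != j) Fw E p e k * ((k == j) == false)%:R =
          \sum_(k < b.+1 | k != j) Fw E p e k.
  by apply: eq_bigr => k /negbTE ->; rewrite mulr1.
have -> : \sum_(k < b.+1 | k != j) Fw E p e k = 1 - Fw E p e j.
  by rewrite -H [Fw _ _ _ j + _]addrC addrK.
by rewrite FJ; case: (e \in E); rewrite ?subr0.
Qed.

Lemma prod_factor (R : numDomainType) (T : finType) (E : {set T}) (p : R)
   (S : {set T}) :
  \prod_e (if e \in S then (if e \in E then p else 0)
           else (if e \in E then 1 - p else 1)) =
  if S \subset E then p ^+ #|S| * (1 - p) ^+ (#|E| - #|S|) else 0.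
Proof.
case: ifP => sub.
  rewrite (eq_bigr (fun e => (if e \in S then p else 1) *
                  (if e \in E :\: S then 1 - p else 1))); last first.
    move=> e _; rewrite inE; case eS: (e \in S) => /=.
      by rewrite (subsetP sub e eS) mulr1.
    by rewrite mul1r.
  rewrite big_split /= -!big_mkcond /= !prodr_const cardsD.
  by rewrite (setIidPr sub).
case/subsetPn: sub => e eS eE.
by rewrite (bigD1 e) //= eS (negbTE eE) mul0r.
Qed.

Lemma distr (R : numDomainType) (T : finType) b (F : T -> 'I_b.+1 -> R) :
  \prod_e \sum_k F e k = \sum_(l : {ffun T -> 'I_b.+1}) \prod_e F e (l e).
Proof. exact: bigA_distr_bigA. Qed.

Lemma marg (R : numDomainType) (T : finType) (E : {set T}) b (p : R)
  (j : 'I_b.+1) (g : {set T} -> R) : j != ord0 ->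
  \sum_(l : {ffun T -> 'I_b.+1}) (\prod_e Fw E p e (l e)) * g [set e | l e == j] =
  \sum_(S : {set T} | S \subset E) p ^+ #|S| * (1 - p) ^+ (#|E| - #|S|) * g S.
Proof.
move=> jn0.
have ind l : g [set e | l e == j] =
    \sum_(S : {set T}) (\prod_e ((l e == j) == (e \in S))%:R) * g S.
  rewrite (bigD1 [set e | l e == j]) //=.
  rewrite [\prod_e _]big1 ?mul1r; last by move=> e _; rewrite inE eqxx.
  rewrite big1 ?addr0 // => S neS.
  case/boolP: [forall e, (l e == j) == (e \in S)] => [/forallP H|/forallPn [e He]].
    suff Heq : S = [set e | l e == j] by rewrite Heq eqxx in neS.
    by apply/setP => e; rewrite inE (eqP (H e)).
  by rewrite (bigD1 e) //= (negbTE He) /= ?mulr0n !mul0r.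
under eq_bigr => l _ do rewrite ind mulr_sumr.
rewrite exchange_big /= [RHS]big_mkcond /=.
apply: eq_bigr => S _.
have -> : \sum_(l : {ffun T -> 'I_b.+1}) (\prod_e Fw E p e (l e)) *
             ((\prod_e ((l e == j) == (e \in S))%:R) * g S)
   = (\sum_(l : {ffun T -> 'I_b.+1})
        \prod_e (Fw E p e (l e) * ((l e == j) == (e \in S))%:R)) * g S.
  by rewrite mulr_suml; apply: eq_bigr => l _; rewrite big_split mulrA.
rewrite -(distr (fun e k => Fw E p e k * ((k == j) == (e \in S))%:R)).
under eq_bigr => e _ do rewrite factor_sum //.
by rewrite prod_factor; case: ifP => _; rewrite ?mul0r.
Qed.

Theorem mainTheorem4 (R : archiRealFieldType) (V : finType) (E : {set {set V}})
  (p : R) :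
  simple_graph E -> 0 < p -> p < 1 ->
  let b := Num.truncn (p^-1) in
  exists M : {set {set V}},
    [/\ M \subset E, is_bmatching b M &
        (b%:R - 1) * expected_mu E p <= (#|M|)%:R].
Proof.
move=> sg p0 p1 b.
set OPT := expected_mu E p.
have OPT0 : 0 <= OPT.
  rewrite /OPT /expected_mu; apply: sumr_ge0 => S _.
  by rewrite !mulr_ge0 ?exprn_ge0 ?ler0n // ?subr_ge0 ltW.
have bp : b%:R * p <= 1.
  have : b%:R <= p^-1 by rewrite /b truncn_le invr_ge0 ltW.
  by rewrite -(ler_pM2r p0) mulVf ?gt_eqF.
pose W (l : {ffun {set V} -> 'I_b.+1}) := \prod_e Fw E p e (l e).
pose val (l : {ffun {set V} -> 'I_b.+1}) :=
  \sum_(j | j != ord0) (mu [set e | l e == j])%:R : R.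
have Fw0 e (k : 'I_b.+1) : 0 <= Fw E p e k.
  by rewrite /Fw; case: (e \in E); case: (k == ord0); rewrite ?subr_ge0 ?bp ?(ltW p0).
have W0 l : 0 <= W l by apply: prodr_ge0 => e _.
have sumW : \sum_l W l = 1.
  by rewrite /W -distr; apply: big1 => e _; exact: sum_Fw.
have sumWV : \sum_l W l * val l = b%:R * OPT.
  under eq_bigr => l _ do rewrite /val mulr_sumr.
  rewrite exchange_big /=.
  rewrite (eq_bigr (fun _ => OPT)); last first.
    by move=> j jn0; exact: (marg _ _ (fun S => (mu S)%:R) jn0).
  by rewrite big_nz sumr_const card_ord mulr_natl.
have [l [Wl vl]] : exists l, 0 < W l /\ b%:R * OPT <= val l.
  case: (boolP [exists l, (0 < W l) && (b%:R * OPT <= val l)]).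
    by case/existsP => l /andP[]; exists l.
  move/existsPn => H; exfalso.
  have Hl l : W l * (val l - b%:R * OPT) <= 0.
    have := H l; rewrite negb_and -leNgt -ltNge; case/orP => [Wle|vlt].
      have -> : W l = 0 by apply/le_anti; rewrite Wle W0.
      by rewrite mul0r.
    by apply: mulr_ge0_le0 => //; rewrite subr_le0 ltW.
  have [l0 Wl0] : exists l0, 0 < W l0.
    case: (boolP [exists l, 0 < W l]) => [/existsP//|/existsPn H0].
    move: sumW; rewrite big1 => [/eqP|l' _]; first by rewrite eq_sym oner_eq0.
    by apply/le_anti; rewrite W0 andbT leNgt H0.
  have : \sum_l W l * (val l - b%:R * OPT) = 0.
    rewrite (eq_bigr (fun l => W l * val l - W l * (b%:R * OPT))); last first.
      by move=> l _; rewrite mulrBr.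
    by rewrite sumrB sumWV -mulr_suml sumW mul1r subrr.
  rewrite (bigD1 l0) //=.
  have t0 : W l0 * (val l0 - b%:R * OPT) < 0.
    rewrite pmulr_rlt0 // subr_lt0 ltNge.
    by have := H l0; rewrite negb_and Wl0.
  have : \sum_(l | l != l0) W l * (val l - b%:R * OPT) <= 0.
    by apply: sumr_le0 => l' _; exact: Hl.
  lra.
have supp e : e \notin E -> l e = ord0.
  move=> eE; apply/eqP; apply/negPn/negP => ne.
  by move: Wl; rewrite /W (bigD1 e) //= /Fw (negbTE eE) (negbTE ne) mul0r ltxx.
pose Nm (S : {set {set V}}) :=
  [arg max_(N > set0 | (N \subset S) && is_matching N) #|N|].
have P0 (S : {set {set V}}) : (set0 \subset S) && is_matching (set0 : {set {set V}}).
  rewrite sub0set /=; apply/forallP => v.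
  have -> : [set e in (set0 : {set {set V}}) | v \in e] = set0.
    by apply/setP => e; rewrite !inE.
  by rewrite cards0.
have NmP (S : {set {set V}}) : [/\ Nm S \subset S, is_matching (Nm S) & #|Nm S| = mu S].
  rewrite /Nm; case: (@arg_maxnP _ set0 (fun N : {set {set V}} => (N \subset S) && is_matching N) (fun N : {set {set V}} => #|N|) (P0 S)).
  move=> N /andP[NS NM] Hmax; split => //; apply/eqP; rewrite eqn_leq.
  apply/andP; split.
    by rewrite /mu; apply: leq_bigmax_cond; rewrite NS.
  by rewrite /mu; apply/bigmax_leqP => N' /Hmax.
pose K j := Nm [set e | l e == j].
pose M := [set e | (l e != ord0) && (e \in K (l e))].
have cardM (q : pred {set V}) :
    #|[set e in M | q e]| = (\sum_(j | j != ord0) #|[set e in K j | q e]|)%N.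
  rewrite -sum1_card (partition_big (fun e => l e) (fun j => j != ord0)) /=; last first.
    by move=> e; rewrite !inE => /andP[/andP[]].
  apply: eq_bigr => j jn0; rewrite -sum1_card; apply: eq_bigl => e; rewrite !inE.
  case lej: (l e == j); rewrite ?andbT ?andbF.
    by rewrite (eqP lej) jn0.
  case eK: (e \in K j) => //=; exfalso.
  have [sub _ _] := NmP [set e | l e == j].
  by move: (subsetP sub e eK); rewrite inE lej.
exists M; split.
- apply/subsetP => e; rewrite inE => /andP[ne _].
  by apply/negPn/negP => eE; rewrite supp in ne.
- apply/forallP => v; rewrite cardM.
  apply: leq_trans (_ : (\sum_(j | j != ord0) 1 <= b)%N).
    apply: leq_sum => j _; have [_ mK _] := NmP [set e | l e == j].
    exact: (forallP mK v).
  by rewrite big_nz sum1_card card_ord.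
- have -> : #|M| = #|[set e in M | predT e]|.
    by apply: eq_card => e; rewrite !inE andbT.
  rewrite cardM.
  have -> : (\sum_(j | j != ord0) #|[set e in K j | predT e]|)%N =
            (\sum_(j | j != ord0) mu [set e | l e == j])%N.
    apply: eq_bigr => j _; have [_ _ <-] := NmP [set e | l e == j].
    by apply: eq_card => e; rewrite !inE andbT.
  rewrite natr_sum -/(val l).
  rewrite mulrBl mul1r; lra.
Qed.
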